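(* Let $v$ be the linear classifier on $[0,1]^n$ defined by $\vec w\in\mathbb{R}^n$ and $q\in\mathbb{R}$, and let $i\ne j$. If $w_i\ge w_j>0$, then $\chi_i(\vec w;q)\ge\chi_j(\vec w;q)$.
   Context: The linear classifier defined by $\vec w$ and $q$ is $v:[0,1]^n\to\{0,1\}$, $v(\vec x)=1$ iff $\vec x\cdot\vec w\ge q$. For $\vec x\in[0,1]^n$, $b\in[0,1]$, $(\vec x_{-i},b)$ is $\vec x$ with $i$-th coordinate replaced by $b$. $\chi_i(\vec w;q)=\int_0^1\int_{[0,1]^n}|v(\vec x_{-i},b)-v(\vec x)|\,d\vec x\,db$. *)

(* Defs.v *)
From Stdlib Require Import Reals Lra Classical ClassicalEpsilon.
Open Scope R_scope.

(* Total 1D Riemann integral on [a,b]: the Riemann integral when f is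
   Riemann integrable on [a,b], and 0 otherwise (the value does not depend
   on the integrability witness, by RiemannInt_P5). *)
Definition Rint (f : R -> R) (a b : R) : R :=
  match excluded_middle_informative (inhabited (Riemann_integrable f a b)) with
  | left H => RiemannInt (epsilon H (fun _ => True))
  | right _ => 0
  end.

(* Points of R^n are represented as x : nat -> R, using coordinates 0..n-1. *)
Definition upd (x : nat -> R) (i : nat) (b : R) : nat -> R :=
  fun k => if Nat.eq_dec k i then b else x k.

(* Integral over the cube [0,1]^n, as an iterated integral over
   coordinates n-1 (outermost), ..., 0 (innermost). *)
Fixpoint cube_int (n : nat) (F : (nat -> R) -> R) : R :=
  match n with
  | O => F (fun _ => 0)
  | S m => Rint (fun t => cube_int m (fun x => F (upd x m t))) 0 1
  end.

Fixpoint dot (n : nat) (x w : nat -> R) : R :=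
  match n with
  | O => 0
  | S m => dot m x w + x m * w m
  end.

Definition classifier (n : nat) (w : nat -> R) (q : R) (x : nat -> R) : R :=
  if Rle_dec q (dot n x w) then 1 else 0.

Definition chi (n : nat) (w : nat -> R) (q : R) (i : nat) : R :=
  Rint (fun b => cube_int n
          (fun x => Rabs (classifier n w q (upd x i b) - classifier n w q x))) 0 1.

(* Main.v *)
Require Import Defs.
From Stdlib Require Import Reals Lra Lia RList ZArith Classical ClassicalEpsilon FunctionalExtensionality List Permutation.
From Coquelicot Require Import Coquelicot.
Open Scope R_scope.

Lemma IsStepFun_ext_open (f g : R -> R) a b : a <= b -> IsStepFun f a b ->
  (forall x, a < x < b -> f x = g x) -> IsStepFun g a b.
Proof.
  intros Hab [l [lf H]] Heq. exists l; exists lf.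
  unfold adapted_couple in *. destruct H as (H1 & H2 & H3 & H4 & H5).
  repeat split; try assumption.
  intros i Hi x Hx. rewrite <- (H5 i Hi x Hx). symmetry. apply Heq.
  unfold open_interval in Hx.
  assert (Hlen : (0 < length l)%nat) by (rewrite H4; lia).
  destruct (RList_P6 l) as [HP _]. specialize (HP H1).
  assert (pos_Rl l 0 <= pos_Rl l i) by (apply HP; lia).
  assert (pos_Rl l (S i) <= pos_Rl l (pred (length l))) by (apply HP; lia).
  rewrite H2 in *; rewrite H3 in *.
  unfold Rmin, Rmax in *; destruct (Rle_dec a b); try lra.
Qed.

Definition AP (f : R -> R) a b e : Type :=
  {phi : StepFun a b & {psi : StepFun a b |
    (forall t, a <= t <= b -> Rabs (f t - phi t) <= psi t) /\ RiemannInt_SF psi <= e}}.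

Lemma SF_int_eq a b (s1 s2 : StepFun a b) : a <= b ->
  (forall x, a < x < b -> s1 x = s2 x) -> RiemannInt_SF s1 = RiemannInt_SF s2.
Proof.
  intros Hab H. apply Rle_antisym; apply StepFun_P37; auto;
  intros x Hx; rewrite H; auto; lra.
Qed.

Lemma AP_glue f a b c e1 e2 : a <= b -> b <= c -> AP f a b e1 -> AP f b c e2 -> AP f a c (e1 + e2).
Proof.
  intros Hab Hbc [phi1 [psi1 [H1 H1']]] [phi2 [psi2 [H2 H2']]].
  set (phi3 := fun x => if Rle_dec x b then phi1 x else phi2 x).
  set (psi3 := fun x => if Rle_dec x b then psi1 x else psi2 x).
  assert (Xp1 : IsStepFun phi3 a b).
  { apply (IsStepFun_ext_open phi1); auto. apply pre. intros x Hx; unfold phi3;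
    destruct (Rle_dec x b); auto; lra. }
  assert (Xp2 : IsStepFun phi3 b c).
  { apply (IsStepFun_ext_open phi2); auto. apply pre. intros x Hx; unfold phi3;
    destruct (Rle_dec x b); auto; lra. }
  assert (Xs1 : IsStepFun psi3 a b).
  { apply (IsStepFun_ext_open psi1); auto. apply pre. intros x Hx; unfold psi3;
    destruct (Rle_dec x b); auto; lra. }
  assert (Xs2 : IsStepFun psi3 b c).
  { apply (IsStepFun_ext_open psi2); auto. apply pre. intros x Hx; unfold psi3;
    destruct (Rle_dec x b); auto; lra. }
  pose (Xp := StepFun_P46 Xp1 Xp2). pose (Xs := StepFun_P46 Xs1 Xs2).
  exists (mkStepFun Xp). exists (mkStepFun Xs). split.
  - intros t Ht; simpl; unfold phi3, psi3; destruct (Rle_dec t b).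
    + apply H1; lra.
    + apply H2; lra.
  - rewrite <- (StepFun_P43 Xs1 Xs2 Xs).
    rewrite (SF_int_eq _ _ (mkStepFun Xs1) psi1 Hab).
    2:{ intros x Hx; simpl; unfold psi3; destruct (Rle_dec x b); auto; lra. }
    rewrite (SF_int_eq _ _ (mkStepFun Xs2) psi2 Hbc).
    2:{ intros x Hx; simpl; unfold psi3; destruct (Rle_dec x b); auto; lra. }
    lra.
Qed.

Lemma AP_base f a b D : a <= b -> 0 <= D -> (forall t, a <= t <= b -> Rabs (f t - f a) <= D) ->
  AP f a b (D * (b - a)).
Proof.
  intros Hab HD H. exists (mkStepFun (StepFun_P4 a b (f a))).
  exists (mkStepFun (StepFun_P4 a b D)). split.
  - intros t Ht; simpl; unfold fct_cte; auto.
  - rewrite StepFun_P18. lra.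
Qed.

Lemma AP_grid f a d : 0 <= d -> (forall x y, x <= y -> f x <= f y) ->
  forall k : nat, AP f a (a + INR k * d) (d * (f (a + INR k * d) - f a)).
Proof.
  intros Hd Hm. induction k.
  - simpl. replace (a + 0 * d) with a by ring. replace (d * (f a - f a)) with (0 * (a - a)) by ring.
    apply AP_base; try lra. intros t Ht. replace t with a by lra. rewrite Rminus_diag, Rabs_R0; lra.
  - rewrite S_INR.
    assert (H0 : 0 <= INR k) by apply pos_INR.
    replace (d * (f (a + (INR k + 1) * d) - f a)) with
      (d * (f (a + INR k * d) - f a) + (f (a + (INR k + 1) * d) - f (a + INR k * d)) * ((a + (INR k + 1) * d) - (a + INR k * d))) by ring.
    apply (AP_glue f a (a + INR k * d)); try nra.
    + apply IHk.
    + apply AP_base; try nra.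
      * assert (f (a + INR k * d) <= f (a + (INR k + 1) * d)) by (apply Hm; nra). lra.
      * intros t Ht. assert (f (a + INR k * d) <= f t) by (apply Hm; lra).
        assert (f t <= f (a + (INR k + 1) * d)) by (apply Hm; lra).
        rewrite Rabs_right; lra.
Qed.

Lemma nat_above x : {N : nat | x < INR N}.
Proof.
  exists (Z.to_nat (up x)). destruct (archimed x) as [H _].
  destruct (Z_le_gt_dec 0 (up x)).
  - rewrite INR_IZR_INZ, Z2Nat.id; auto.
  - pose proof (pos_INR (Z.to_nat (up x))). apply Z.gt_lt in g. apply IZR_lt in g. lra.
Qed.

Lemma incr_RI f a b : a <= b -> (forall x y, x <= y -> f x <= f y) -> Riemann_integrable f a b.
Proof.
  intros Hab Hm eps.
  assert (Hfd : 0 <= f b - f a) by (assert (f a <= f b) by (apply Hm; lra); lra).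
  destruct (nat_above ((b - a) * (f b - f a) / eps)) as [N HN0].
  assert (HN : (b - a) * (f b - f a) / eps < INR N + 1) by lra.
  set (M := INR N + 1).
  assert (HM : 0 < M) by (unfold M; pose proof (pos_INR N); lra).
  set (d := (b - a) / M).
  assert (Hd : 0 <= d) by (unfold d; apply Rmult_le_pos; [lra| left; apply Rinv_0_lt_compat; lra]).
  pose proof (AP_grid f a d Hd Hm (S N)) as X.
  assert (Heq : a + INR (S N) * d = b).
  { unfold d. rewrite S_INR. fold M. field. lra. }
  rewrite Heq in X. destruct X as [phi [psi [H1 H2]]].
  exists phi; exists psi. split.
  - intros t Ht; apply H1. unfold Rmin, Rmax in Ht; destruct (Rle_dec a b); lra.
  - assert (0 <= RiemannInt_SF psi).
    { assert (Hc := StepFun_P37 (mkStepFun (StepFun_P4 a b 0)) psi Hab).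
      rewrite StepFun_P18 in Hc. replace 0 with (0 * (b - a)) by ring. apply Hc.
      intros x Hx. simpl; unfold fct_cte.
      specialize (H1 x ltac:(lra)). pose proof (Rabs_pos (f x - phi x)). lra. }
    rewrite Rabs_right by lra.
    apply Rle_lt_trans with (d * (f b - f a)); auto.
    unfold d. pose proof (cond_pos eps).
    apply Rmult_lt_reg_r with (M / eps). apply Rdiv_lt_0_compat; lra.
    replace ((b - a) / M * (f b - f a) * (M / eps)) with ((b - a) * (f b - f a) / eps) by (field; lra).
    replace (eps * (M / eps)) with M by (field; lra). unfold M. lra.
Qed.

Definition mono (f : R -> R) := (forall x y, x <= y -> f x <= f y) \/ (forall x y, x <= y -> f y <= f x).

Lemma mono_RI f a b : a <= b -> mono f -> Riemann_integrable f a b.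
Proof.
  intros Hab Hmo.
  destruct (excluded_middle_informative (forall x y, x <= y -> f x <= f y)) as [H|Hn].
  - apply incr_RI; auto.
  - assert (H : forall x y, x <= y -> f y <= f x) by (destruct Hmo; tauto).
    refine (@RiemannInt.Riemann_integrable_ext (fun x => - - f x) f a b _ _). intros; ring.
    apply Riemann_integrable_Ropp. apply incr_RI; auto. intros x y Hxy. specialize (H x y Hxy). lra.
Qed.

Lemma Rint_RInt f a b : Riemann_integrable f a b -> Rint f a b = RInt f a b.
Proof.
  intros pr. unfold Rint. destruct excluded_middle_informative as [H|H].
  - rewrite (RInt_Reals f a b (epsilon H (fun _ => True))). reflexivity.
  - exfalso; apply H; constructor; exact pr.
Qed.

Lemma mono_ex f a b : a <= b -> mono f -> ex_RInt f a b.
Proof. intros; apply ex_RInt_Reals_1, mono_RI; auto. Qed.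

Lemma mono_Rint f : mono f -> Rint f 0 1 = RInt f 0 1.
Proof. intros; apply Rint_RInt, mono_RI; auto; lra. Qed.

Fixpoint rsum (g : nat -> R) (k : nat) : R :=
  match k with O => 0 | S k => rsum g k + g k end.

Definition avg (g : R -> R) (N : nat) : R := / INR N * rsum (fun i => g (INR i / INR N)) N.

Lemma RS_incr g N : (0 < N)%nat -> (forall x y, x <= y -> g x <= g y) ->
  forall k, 0 <= RInt g 0 (INR k / INR N) - / INR N * rsum (fun i => g (INR i / INR N)) k
            <= (g (INR k / INR N) - g 0) / INR N.
Proof.
  intros HN Hm. assert (HN' : 0 < INR N) by (apply lt_0_INR; auto).
  assert (Hmo : mono g) by (left; auto).
  induction k.
  - simpl. replace (0 / INR N) with 0 by (field; lra). rewrite RInt_point.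
    unfold zero; simpl. split; [lra|]. replace ((g 0 - g 0) / INR N) with 0 by (field; lra). lra.
  - rewrite S_INR.
    assert (Hk : 0 <= INR k) by apply pos_INR.
    assert (H1 : 0 <= INR k / INR N) by (apply Rdiv_le_0_compat; lra).
    assert (H2 : INR k / INR N <= (INR k + 1) / INR N) by (apply Rmult_le_compat_r; [left; apply Rinv_0_lt_compat; lra | lra]).
    rewrite <- (RInt_Chasles g 0 (INR k / INR N)); try (apply mono_ex; auto; lra).
    set (x := INR k / INR N) in *. set (y := (INR k + 1) / INR N) in *.
    assert (Hxy : y - x = / INR N) by (unfold x, y; field; lra).
    assert (Lo : RInt (fun _ => g x) x y <= RInt g x y).
    { apply RInt_le; auto. apply ex_RInt_const. apply mono_ex; auto. intros z Hz; apply Hm; lra. }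
    assert (Hi : RInt g x y <= RInt (fun _ => g y) x y).
    { apply RInt_le; auto. apply mono_ex; auto. apply ex_RInt_const. intros z Hz; apply Hm; lra. }
    rewrite !RInt_const in Lo, Hi. change (scal (y - x) (g x)) with ((y - x) * g x) in Lo.
    change (scal (y - x) (g y)) with ((y - x) * g y) in Hi.
    rewrite Hxy in Lo, Hi. simpl rsum. change (plus (RInt g 0 x) (RInt g x y)) with (RInt g 0 x + RInt g x y).
    destruct IHk as [IH1 IH2]. rewrite Rmult_plus_distr_l. split.
    + change (INR k / INR N) with x. lra.
    + change (INR k / INR N) with x. replace ((g y - g 0) / INR N) with ((g x - g 0) / INR N + / INR N * (g y - g x)) by (field; lra).
      nra.
Qed.

Lemma RS_mono g N : (0 < N)%nat -> mono g ->
  Rabs (RInt g 0 1 - avg g N) <= Rabs (g 1 - g 0) / INR N.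
Proof.
  intros HN Hmo. assert (HN' : 0 < INR N) by (apply lt_0_INR; auto).
  assert (E : INR N / INR N = 1) by (field; lra).
  unfold avg.
  destruct (excluded_middle_informative (forall x y, x <= y -> g x <= g y)) as [H|Hn].
  - pose proof (RS_incr g N HN H N) as [A B]. rewrite E in A, B.
    assert (g 0 <= g 1) by (apply H; lra).
    rewrite Rabs_right by lra. rewrite Rabs_right by lra. lra.
  - assert (H : forall x y, x <= y -> g y <= g x) by (destruct Hmo; tauto).
    pose proof (RS_incr (fun x => - g x) N HN ltac:(intros x y Hxy; specialize (H x y Hxy); lra) N) as [A B].
    rewrite E in A, B.
    assert (Ho : RInt (fun x => - g x) 0 1 = - RInt g 0 1).
    { apply (RInt_opp g 0 1). apply mono_ex; auto; lra. }
    rewrite Ho in A, B.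
    assert (Hs : forall k, rsum (fun i => - g (INR i / INR N)) k = - rsum (fun i => g (INR i / INR N)) k).
    { induction k; simpl; [ring| rewrite IHk; ring]. }
    rewrite Hs in A, B.
    assert (g 1 <= g 0) by (apply H; lra).
    rewrite Rabs_left1 by lra. rewrite Rabs_left1 by lra.
    apply Rle_trans with ((- g 1 - - g 0) / INR N); [lra|].
    right; field; lra.
Qed.

Lemma mono_bound g x : mono g -> 0 <= x <= 1 -> Rabs (g x) <= Rabs (g 0) + Rabs (g 1).
Proof.
  intros [H|H] Hx.
  - assert (g 0 <= g x) by (apply H; lra). assert (g x <= g 1) by (apply H; lra).
    unfold Rabs; repeat destruct Rcase_abs; lra.
  - assert (g x <= g 0) by (apply H; lra). assert (g 1 <= g x) by (apply H; lra).
    unfold Rabs; repeat destruct Rcase_abs; lra.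
Qed.

Lemma rsum_diff a b N c : (forall k, (k < N)%nat -> Rabs (a k - b k) <= c) ->
  Rabs (rsum a N - rsum b N) <= INR N * c.
Proof.
  induction N; intros H.
  - simpl. rewrite Rminus_diag, Rabs_R0; lra.
  - simpl rsum. rewrite S_INR.
    replace (rsum a N + a N - (rsum b N + b N)) with ((rsum a N - rsum b N) + (a N - b N)) by ring.
    eapply Rle_trans; [apply Rabs_triang|].
    specialize (IHN ltac:(intros k Hk; apply H; lia)). specialize (H N ltac:(lia)). lra.
Qed.

Lemma rsum_plus a b N : rsum (fun k => a k + b k) N = rsum a N + rsum b N.
Proof. induction N; simpl; [ring| rewrite IHN; ring]. Qed.

Lemma rsum_scal c a N : rsum (fun k => c * a k) N = c * rsum a N.
Proof. induction N; simpl; [ring| rewrite IHN; ring]. Qed.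

Lemma rsum_swap (F : nat -> nat -> R) N M :
  rsum (fun k => rsum (fun l => F k l) M) N = rsum (fun l => rsum (fun k => F k l) N) M.
Proof.
  induction N; simpl.
  - induction M; simpl; auto. rewrite <- IHM; ring.
  - rewrite IHN. rewrite <- rsum_plus. reflexivity.
Qed.

Lemma small_zero D C : (forall N : nat, (0 < N)%nat -> Rabs D <= C / INR N) -> D = 0.
Proof.
  intros H. destruct (Req_dec D 0) as [|Hne]; auto. exfalso.
  assert (Hp : 0 < Rabs D) by (apply Rabs_pos_lt; auto).
  destruct (nat_above (C / Rabs D)) as [N HN].
  assert (HN0 : (0 < S N)%nat) by lia.
  specialize (H (S N) HN0). rewrite S_INR in H.
  assert (0 <= INR N) by apply pos_INR.
  apply Rmult_le_compat_r with (r := INR N + 1) in H; [|lra].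
  replace (C / (INR N + 1) * (INR N + 1)) with C in H by (field; lra).
  assert (C / Rabs D * Rabs D = C) by (field; lra).
  nra.
Qed.

Definition umono2 (f : R -> R -> R) :=
  (forall t x y, x <= y -> f x t <= f y t) \/ (forall t x y, x <= y -> f y t <= f x t).

Lemma exchange (f : R -> R -> R) :
  umono2 f -> umono2 (fun t s => f s t) ->
  Rint (fun s => Rint (fun t => f s t) 0 1) 0 1 = Rint (fun t => Rint (fun s => f s t) 0 1) 0 1.
Proof.
  intros Hs Ht.
  assert (Mt : forall s, mono (fun t => f s t)).
  { intros s; destruct Ht as [H|H]; [left|right]; intros; apply H; auto. }
  assert (Ms : forall t, mono (fun s => f s t)).
  { intros t; destruct Hs as [H|H]; [left|right]; intros; apply H; auto. }
  assert (MI : mono (fun s => RInt (fun t => f s t) 0 1)).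
  { destruct Hs as [H|H]; [left|right]; intros x y Hxy; apply RInt_le; try lra;
    try apply mono_ex; auto; try lra; intros; apply H; auto. }
  assert (MJ : mono (fun t => RInt (fun s => f s t) 0 1)).
  { destruct Ht as [H|H]; [left|right]; intros x y Hxy; apply RInt_le; try lra;
    try apply mono_ex; auto; try lra; intros; apply H; auto. }
  rewrite (functional_extensionality (fun s => Rint (fun t => f s t) 0 1) (fun s => RInt (fun t => f s t) 0 1))
    by (intros; apply mono_Rint; auto).
  rewrite (functional_extensionality (fun t => Rint (fun s => f s t) 0 1) (fun t => RInt (fun s => f s t) 0 1))
    by (intros; apply mono_Rint; auto).
  rewrite !mono_Rint by auto.
  set (B := Rabs (f 0 0) + Rabs (f 0 1) + Rabs (f 1 0) + Rabs (f 1 1)).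
  assert (HB : forall s t, 0 <= s <= 1 -> 0 <= t <= 1 -> Rabs (f s t) <= B).
  { intros s t Hs' Ht'. eapply Rle_trans. apply (mono_bound (fun s => f s t)); auto.
    pose proof (mono_bound (fun t => f 0 t) t (Mt 0) Ht').
    pose proof (mono_bound (fun t => f 1 t) t (Mt 1) Ht'). simpl in *. unfold B; lra. }
  assert (HIB : forall s, 0 <= s <= 1 -> Rabs (RInt (fun t => f s t) 0 1) <= B).
  { intros s Hs'. replace B with ((1 - 0) * B) by ring. apply abs_RInt_le_const; try lra.
    apply mono_ex; auto; lra. intros; apply HB; lra. }
  assert (HJB : forall t, 0 <= t <= 1 -> Rabs (RInt (fun s => f s t) 0 1) <= B).
  { intros t Ht'. replace B with ((1 - 0) * B) by ring. apply abs_RInt_le_const; try lra.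
    apply mono_ex; auto; lra. intros; apply HB; lra. }
  assert (Key : forall (g : R -> R -> R), (forall s, mono (fun t => g s t)) ->
            mono (fun s => RInt (fun t => g s t) 0 1) ->
            (forall s t, 0 <= s <= 1 -> 0 <= t <= 1 -> Rabs (g s t) <= B) ->
            forall N, (0 < N)%nat ->
            Rabs (RInt (fun s => RInt (fun t => g s t) 0 1) 0 1 -
                  / INR N * (/ INR N * rsum (fun k => rsum (fun l => g (INR k / INR N) (INR l / INR N)) N) N))
            <= 4 * B / INR N).
  { intros g Hg HgI HgB N HN. rewrite <- rsum_scal. assert (HN' : 0 < INR N) by (apply lt_0_INR; auto).
    assert (Hk01 : forall k, (k < N)%nat -> 0 <= INR k / INR N <= 1).
    { intros k Hk. apply lt_INR in Hk. split. apply Rdiv_le_0_compat; [apply pos_INR|lra].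
      apply Rmult_le_reg_r with (INR N); auto. field_simplify; lra. }
    pose proof (RS_mono _ N HN HgI) as A1. unfold avg in A1.
    assert (A2 : Rabs (RInt (fun t => g 1 t) 0 1 - RInt (fun t => g 0 t) 0 1) <= 2 * B).
    { eapply Rle_trans; [apply Rabs_triang|]. rewrite Rabs_Ropp.
      assert (Rabs (RInt (fun t => g 1 t) 0 1) <= B).
      { replace B with ((1 - 0) * B) by ring. apply abs_RInt_le_const; try lra.
        apply mono_ex; auto; lra. intros; apply HgB; lra. }
      assert (Rabs (RInt (fun t => g 0 t) 0 1) <= B).
      { replace B with ((1 - 0) * B) by ring. apply abs_RInt_le_const; try lra.
        apply mono_ex; auto; lra. intros; apply HgB; lra. }
      lra. }
    assert (A3 : Rabs (rsum (fun i => RInt (fun t => g (INR i / INR N) t) 0 1) N -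
                       rsum (fun k => / INR N * rsum (fun l => g (INR k / INR N) (INR l / INR N)) N) N)
                 <= INR N * (2 * B / INR N)).
    { apply rsum_diff. intros k Hk.
      pose proof (RS_mono _ N HN (Hg (INR k / INR N))) as R1. unfold avg in R1. simpl in R1.
      eapply Rle_trans; [apply R1|]. apply Rmult_le_compat_r. left; apply Rinv_0_lt_compat; auto.
      eapply Rle_trans; [apply Rabs_triang|]. rewrite Rabs_Ropp.
      pose proof (HgB (INR k / INR N) 1 (Hk01 k Hk) ltac:(lra)).
      pose proof (HgB (INR k / INR N) 0 (Hk01 k Hk) ltac:(lra)). lra. }
    set (X := RInt (fun s => RInt (fun t => g s t) 0 1) 0 1) in *.
    set (Y := rsum (fun i => RInt (fun t => g (INR i / INR N) t) 0 1) N) in *.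
    set (Z := rsum (fun k => / INR N * rsum (fun l => g (INR k / INR N) (INR l / INR N)) N) N) in *.
    replace (X - / INR N * Z) with ((X - / INR N * Y) + / INR N * (Y - Z)) by ring.
    eapply Rle_trans; [apply Rabs_triang|]. rewrite Rabs_mult.
    rewrite (Rabs_right (/ INR N)) by (left; apply Rinv_0_lt_compat; auto).
    assert (Rabs (g 1 0) <= B) by (apply HgB; lra).
    apply Rle_trans with (2 * B / INR N + / INR N * (INR N * (2 * B / INR N))).
    - apply Rplus_le_compat.
      + eapply Rle_trans; [apply A1|]. apply Rmult_le_compat_r; [left; apply Rinv_0_lt_compat; auto|].
        exact A2.
      + apply Rmult_le_compat_l; [left; apply Rinv_0_lt_compat; auto| exact A3].
    - right; field; lra. }
  apply Rminus_diag_uniq. apply (small_zero _ (8 * B)). intros N HN.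
  assert (HN' : 0 < INR N) by (apply lt_0_INR; auto).
  pose proof (Key f Mt MI HB N HN) as K1.
  pose proof (Key (fun t s => f s t) Ms MJ ltac:(intros; apply HB; auto) N HN) as K2. simpl in K2.
  rewrite rsum_swap in K2.
  set (S1 := rsum (fun k => rsum (fun l => f (INR k / INR N) (INR l / INR N)) N) N) in *.
  set (P := RInt (fun s => RInt (fun t => f s t) 0 1) 0 1) in *.
  set (Q := RInt (fun t => RInt (fun s => f s t) 0 1) 0 1) in *.
  replace (P - Q) with ((P - / INR N * (/ INR N * S1)) - (Q - / INR N * (/ INR N * S1))) by ring.
  eapply Rle_trans; [apply Rabs_triang|]. rewrite Rabs_Ropp.
  replace (8 * B / INR N) with (4 * B / INR N + 4 * B / INR N) by (field; lra).
  apply Rplus_le_compat; auto.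
Qed.

Fixpoint ci (l : list nat) (F : (nat -> R) -> R) (z : nat -> R) : R :=
  match l with nil => F z | k :: l' => Rint (fun t => ci l' F (upd z k t)) 0 1 end.

Lemma upd_same x k s t : upd (upd x k s) k t = upd x k t.
Proof. apply functional_extensionality; intro m; unfold upd; destruct Nat.eq_dec; auto. Qed.

Lemma upd_comm x k m s t : k <> m -> upd (upd x k s) m t = upd (upd x m t) k s.
Proof. intros H; apply functional_extensionality; intro p; unfold upd;
  destruct (Nat.eq_dec p m), (Nat.eq_dec p k); subst; auto; lia. Qed.

Lemma upd_eq x k s : upd x k s k = s.
Proof. unfold upd; destruct Nat.eq_dec; auto; lia. Qed.

Lemma upd_neq x k s m : m <> k -> upd x k s m = x m.
Proof. intros; unfold upd; destruct Nat.eq_dec; auto; lia. Qed.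

Definition SM (F : (nat -> R) -> R) := forall k,
  (forall x s t, s <= t -> F (upd x k s) <= F (upd x k t)) \/
  (forall x s t, s <= t -> F (upd x k t) <= F (upd x k s)).

Lemma SM_mono F x k : SM F -> mono (fun t => F (upd x k t)).
Proof. intros H; destruct (H k) as [A|A]; [left|right]; intros; apply A; auto. Qed.

Lemma ci_SM l F : SM F -> SM (ci l F).
Proof.
  intros HF; induction l as [|k l IH]; simpl; auto.
  intros m. destruct (Nat.eq_dec m k) as [->|Hmk].
  - left. intros x s t _. rewrite (functional_extensionality (fun t0 => ci l F (upd (upd x k s) k t0)) (fun t0 => ci l F (upd x k t0))) by (intros; rewrite upd_same; auto).
    rewrite (functional_extensionality (fun t0 => ci l F (upd (upd x k t) k t0)) (fun t0 => ci l F (upd x k t0))) by (intros; rewrite upd_same; auto). lra.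
  - destruct (IH m) as [A|A]; [left|right]; intros x s t Hst;
    rewrite !mono_Rint by (apply SM_mono; auto);
    apply RInt_le; try lra; try (apply mono_ex; [lra| apply SM_mono; auto]);
    intros u _; rewrite !(upd_comm _ m k) by auto; apply A; auto.
Qed.

Lemma ci_lin l F1 F2 c z : SM F1 -> SM F2 ->
  ci l (fun x => F1 x + c * F2 x) z = ci l F1 z + c * ci l F2 z.
Proof.
  intros H1 H2. revert z; induction l as [|k l IH]; intros z; simpl; auto.
  rewrite (functional_extensionality (fun t => ci l (fun x => F1 x + c * F2 x) (upd z k t))
     (fun t => ci l F1 (upd z k t) + c * ci l F2 (upd z k t))) by (intros; apply IH).
  assert (I1 : Riemann_integrable (fun t => ci l F1 (upd z k t)) 0 1) by (apply mono_RI; [lra| apply SM_mono, ci_SM; auto]).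
  assert (I2 : Riemann_integrable (fun t => ci l F2 (upd z k t)) 0 1) by (apply mono_RI; [lra| apply SM_mono, ci_SM; auto]).
  rewrite Rint_RInt. 2:{ apply Riemann_integrable_plus; auto. apply RiemannInt.Riemann_integrable_scal; auto. }
  rewrite !Rint_RInt by auto.
  rewrite (RInt_plus (fun t => ci l F1 (upd z k t)) (fun t => c * ci l F2 (upd z k t))).
  - rewrite (RInt_scal (fun t => ci l F2 (upd z k t))). reflexivity. apply ex_RInt_Reals_1; auto.
  - apply ex_RInt_Reals_1; auto.
  - apply (ex_RInt_scal (fun t => ci l F2 (upd z k t))). apply ex_RInt_Reals_1; auto.
Qed.

Definition LC3 (F : (nat -> R) -> R) := exists F1 F2 F3 c2 c3, SM F1 /\ SM F2 /\ SM F3 /\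
  forall x, F x = F1 x + c2 * F2 x + c3 * F3 x.

Lemma ci_LC3 l F1 F2 F3 c2 c3 z : SM F1 -> SM F2 -> SM F3 ->
  ci l (fun x => F1 x + c2 * F2 x + c3 * F3 x) z = ci l F1 z + c2 * ci l F2 z + c3 * ci l F3 z.
Proof.
  intros H1 H2 H3.
  assert (E : forall x, F1 x + c2 * F2 x + c3 * F3 x = (F1 x + c3 * F3 x) + c2 * F2 x) by (intros; ring).
  rewrite (functional_extensionality _ _ E).
  assert (HS : forall l z, ci l (fun x => F1 x + c3 * F3 x + c2 * F2 x) z = ci l F1 z + c3 * ci l F3 z + c2 * ci l F2 z).
  { clear z l. intros l; induction l as [|k l IH]; intros z; simpl; auto.
    rewrite (functional_extensionality (fun t => ci l (fun x => F1 x + c3 * F3 x + c2 * F2 x) (upd z k t))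
     (fun t => (ci l F1 (upd z k t) + c3 * ci l F3 (upd z k t)) + c2 * ci l F2 (upd z k t))) by (intros; apply IH).
    assert (I1 : Riemann_integrable (fun t => ci l F1 (upd z k t)) 0 1) by (apply mono_RI; [lra| apply SM_mono, ci_SM; auto]).
    assert (I2 : Riemann_integrable (fun t => ci l F2 (upd z k t)) 0 1) by (apply mono_RI; [lra| apply SM_mono, ci_SM; auto]).
    assert (I3 : Riemann_integrable (fun t => ci l F3 (upd z k t)) 0 1) by (apply mono_RI; [lra| apply SM_mono, ci_SM; auto]).
    assert (I13 : Riemann_integrable (fun t => ci l F1 (upd z k t) + c3 * ci l F3 (upd z k t)) 0 1)
      by (apply Riemann_integrable_plus; auto; apply RiemannInt.Riemann_integrable_scal; auto).
    rewrite Rint_RInt. 2:{ apply Riemann_integrable_plus; auto. apply RiemannInt.Riemann_integrable_scal; auto. }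
    rewrite !Rint_RInt by auto.
    rewrite (RInt_plus (fun t => ci l F1 (upd z k t) + c3 * ci l F3 (upd z k t)) (fun t => c2 * ci l F2 (upd z k t))).
    2: apply ex_RInt_Reals_1; auto.
    2: apply (ex_RInt_scal (fun t => ci l F2 (upd z k t))); apply ex_RInt_Reals_1; auto.
    rewrite (RInt_plus (fun t => ci l F1 (upd z k t)) (fun t => c3 * ci l F3 (upd z k t))).
    2: apply ex_RInt_Reals_1; auto.
    2: apply (ex_RInt_scal (fun t => ci l F3 (upd z k t))); apply ex_RInt_Reals_1; auto.
    rewrite (RInt_scal (fun t => ci l F2 (upd z k t))) by (apply ex_RInt_Reals_1; auto).
    rewrite (RInt_scal (fun t => ci l F3 (upd z k t))) by (apply ex_RInt_Reals_1; auto).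
    reflexivity. }
  rewrite HS; ring.
Qed.

Lemma LC3_ext F : LC3 F -> exists F1 F2 F3 c2 c3, SM F1 /\ SM F2 /\ SM F3 /\
  forall l z, ci l F z = ci l F1 z + c2 * ci l F2 z + c3 * ci l F3 z.
Proof.
  intros (F1 & F2 & F3 & c2 & c3 & H1 & H2 & H3 & E).
  exists F1, F2, F3, c2, c3; repeat split; auto.
  intros l z. rewrite (functional_extensionality F _ E). apply ci_LC3; auto.
Qed.

Lemma LC3_ci l F : LC3 F -> LC3 (ci l F).
Proof.
  intros H; destruct (LC3_ext F H) as (F1 & F2 & F3 & c2 & c3 & H1 & H2 & H3 & E).
  exists (ci l F1), (ci l F2), (ci l F3), c2, c3; repeat split; try apply ci_SM; auto.
Qed.

Lemma LC3_ex F x k : LC3 F -> ex_RInt (fun t => F (upd x k t)) 0 1.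
Proof.
  intros (F1 & F2 & F3 & c2 & c3 & H1 & H2 & H3 & E).
  apply (ex_RInt_ext (fun t => F1 (upd x k t) + c2 * F2 (upd x k t) + c3 * F3 (upd x k t))).
  { intros; rewrite E; auto. }
  apply ex_RInt_Reals_1.
  repeat apply Riemann_integrable_plus; try apply RiemannInt.Riemann_integrable_scal;
  apply mono_RI; try lra; apply SM_mono; auto.
Qed.

Lemma LC3_RI F x k : LC3 F -> Riemann_integrable (fun t => F (upd x k t)) 0 1.
Proof. intros; apply ex_RInt_Reals_0, LC3_ex; auto. Qed.

Lemma ci_mono l F G z : LC3 F -> LC3 G -> (forall x, F x <= G x) -> ci l F z <= ci l G z.
Proof.
  intros HF HG H. revert z; induction l as [|k l IH]; intros z; simpl; auto.
  rewrite !Rint_RInt by (apply LC3_RI, LC3_ci; auto).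
  apply RInt_le; try lra; try (apply LC3_ex, LC3_ci; auto).
  intros; apply IH.
Qed.

Lemma ci_perm_SM F : SM F -> forall l l', Permutation l l' -> NoDup l -> forall z, ci l F z = ci l' F z.
Proof.
  intros HF l l' HP. induction HP; intros ND z; simpl; auto.
  - inversion ND; subst. apply f_equal3; auto. apply functional_extensionality; intros; apply IHHP; auto.
  - inversion ND; subst. assert (Hxy : y <> x) by (intro; subst; apply H1; left; auto).
    set (f := fun s t => ci l F (upd (upd z y s) x t)).
    change (Rint (fun s => Rint (fun t => f s t) 0 1) 0 1 =
            Rint (fun t => Rint (fun s => ci l F (upd (upd z x t) y s)) 0 1) 0 1).
    rewrite exchange.
    + apply f_equal3; auto. apply functional_extensionality; intro t. apply f_equal3; auto.
      apply functional_extensionality; intro s. unfold f. rewrite upd_comm; auto.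
    + destruct (ci_SM l F HF y) as [A|A]; [left|right]; intros t s1 s2 Hs; unfold f;
      rewrite !(upd_comm z y x) by auto; apply A; auto.
    + destruct (ci_SM l F HF x) as [A|A]; [left|right]; intros s t1 t2 Ht; unfold f; apply A; auto.
  - rewrite IHHP1 by auto. apply IHHP2. apply (Permutation_NoDup HP1); auto.
Qed.

Lemma ci_perm F : LC3 F -> forall l l', Permutation l l' -> NoDup l -> forall z, ci l F z = ci l' F z.
Proof.
  intros H l l' HP ND z; destruct (LC3_ext F H) as (F1 & F2 & F3 & c2 & c3 & H1 & H2 & H3 & E).
  rewrite !E. rewrite (ci_perm_SM F1 H1 l l'), (ci_perm_SM F2 H2 l l'), (ci_perm_SM F3 H3 l l') by auto. reflexivity.
Qed.

Lemma ci_app l1 l2 F z : ci (l1 ++ l2) F z = ci l1 (ci l2 F) z.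
Proof. revert z; induction l1; intros z; simpl; auto. apply f_equal3; auto.
  apply functional_extensionality; intros; apply IHl1. Qed.

Lemma ci_upd l k t F z : ~ In k l -> ci l (fun x => F (upd x k t)) z = ci l F (upd z k t).
Proof.
  revert z; induction l as [|m l IH]; intros z Hn; simpl; auto.
  apply f_equal3; auto. apply functional_extensionality; intro s.
  rewrite IH by (intro; apply Hn; right; auto). rewrite upd_comm; auto.
  intro; apply Hn; left; auto.
Qed.

Fixpoint down (n : nat) : list nat := match n with O => nil | S m => m :: down m end.

Lemma in_down n k : In k (down n) <-> (k < n)%nat.
Proof. induction n; simpl; [split; [tauto|lia]|]. rewrite IHn. lia. Qed.

Lemma NoDup_down n : NoDup (down n).
Proof. induction n; simpl; constructor; auto. rewrite in_down; lia. Qed.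

Lemma cube_ci n F : cube_int n F = ci (down n) F (fun _ => 0).
Proof.
  revert F; induction n; intros F; simpl; auto.
  apply f_equal3; auto. apply functional_extensionality; intro t.
  rewrite IHn. apply ci_upd. rewrite in_down; lia.
Qed.

Definition ind (q v : R) : R := if Rle_dec q v then 1 else 0.

Lemma ind_mono q v1 v2 : v1 <= v2 -> ind q v1 <= ind q v2.
Proof. intros; unfold ind; repeat destruct Rle_dec; lra. Qed.

Lemma ind_pos q v : 0 <= ind q v.
Proof. unfold ind; destruct Rle_dec; lra. Qed.

Lemma dot_upd n x k s w : dot n (upd x k s) w =
  dot n x w + (if lt_dec k n then w k * (s - x k) else 0).
Proof.
  induction n as [|m IH]; simpl.
  - destruct (lt_dec k 0); [lia|ring].
  - rewrite IH. unfold upd. destruct (Nat.eq_dec m k) as [Heq|Hnk];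
    destruct (lt_dec k m), (lt_dec k (S m)); try subst; try lia; try ring.
Qed.

Definition AffS (D : (nat -> R) -> R) (al : nat -> R) := forall k x s, D (upd x k s) = D x + al k * (s - x k).

Lemma upd_at x k s : upd x k s k = s.
Proof. apply upd_eq. Qed.

Lemma SM_ind q D al : AffS D al -> SM (fun x => ind q (D x)).
Proof.
  intros H k. destruct (Rle_dec 0 (al k)); [left|right]; intros x s t Hst; rewrite !H; apply ind_mono; nra.
Qed.

Lemma SM_ind2 q D1 al1 D2 al2 : AffS D1 al1 -> AffS D2 al2 -> (forall k, 0 <= al1 k * al2 k) ->
  SM (fun x => ind q (D1 x) * ind q (D2 x)).
Proof.
  intros H1 H2 Hp k. specialize (Hp k).
  destruct (Rle_dec 0 (al1 k)), (Rle_dec 0 (al2 k)).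
  - left; intros x s t Hst; rewrite !H1, !H2. apply Rmult_le_compat; try apply ind_pos; apply ind_mono; nra.
  - right; intros x s t Hst; rewrite !H1, !H2. assert (al1 k <= 0) by nra.
    apply Rmult_le_compat; try apply ind_pos; apply ind_mono; nra.
  - right; intros x s t Hst; rewrite !H1, !H2. assert (al2 k <= 0) by nra.
    apply Rmult_le_compat; try apply ind_pos; apply ind_mono; nra.
  - right; intros x s t Hst; rewrite !H1, !H2.
    apply Rmult_le_compat; try apply ind_pos; apply ind_mono; nra.
Qed.

Section G.
Variables (n : nat) (w : nat -> R) (q : R).

Definition DB (x : nat -> R) := dot n x w.
Definition alB (k : nat) := if lt_dec k n then w k else 0.
Definition DA (i : nat) (x : nat -> R) := dot n (upd x i (x n)) w.
Definition alA (i k : nat) := alB k + (if Nat.eq_dec k n then w i else 0) - (if Nat.eq_dec k i then w i else 0).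

Lemma AffS_B : AffS DB alB.
Proof. intros k x s; unfold DB, alB; rewrite dot_upd; destruct (lt_dec k n); ring. Qed.

Lemma DA_eq i x : (i < n)%nat -> DA i x = DB x + w i * (x n - x i).
Proof. intros; unfold DA, DB; rewrite dot_upd; destruct (lt_dec i n); [ring|lia]. Qed.

Lemma AffS_A i : (i < n)%nat -> AffS (DA i) (alA i).
Proof.
  intros Hi k x s. rewrite !DA_eq by auto. rewrite AffS_B. unfold alA, alB.
  unfold upd. destruct (Nat.eq_dec n k), (Nat.eq_dec i k), (Nat.eq_dec k n), (Nat.eq_dec k i), (lt_dec k n);
  subst; try lia; try ring.
Qed.

Lemma alprod i k : (i < n)%nat -> 0 <= alA i k * alB k.
Proof.
  intros Hi; unfold alA, alB. destruct (Nat.eq_dec k n), (Nat.eq_dec k i), (lt_dec k n); subst; try lia; nra.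
Qed.

Definition Gf (i : nat) (x : nat -> R) := Rabs (classifier n w q (upd x i (x n)) - classifier n w q x).

Lemma Gf_eq i x : Gf i x = ind q (DA i x) + 1 * ind q (DB x) + (-2) * (ind q (DA i x) * ind q (DB x)).
Proof.
  unfold Gf, classifier, ind, DA, DB. destruct (Rle_dec q (dot n (upd x i (x n)) w)), (Rle_dec q (dot n x w));
  rewrite ?Rminus_diag, ?Rabs_R0; try (rewrite Rabs_right; lra); try (rewrite Rabs_left; lra); try lra.
Qed.

Lemma LC3_G i : (i < n)%nat -> LC3 (Gf i).
Proof.
  intros Hi. exists (fun x => ind q (DA i x)), (fun x => ind q (DB x)), (fun x => ind q (DA i x) * ind q (DB x)), 1, (-2).
  repeat split.
  - apply (SM_ind q _ (alA i)), AffS_A; auto.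
  - apply (SM_ind q _ alB), AffS_B.
  - apply (SM_ind2 q _ (alA i) _ alB); [apply AffS_A; auto | apply AffS_B | intros; apply alprod; auto].
  - apply Gf_eq.
Qed.

Lemma chi_ci i : (i < n)%nat -> chi n w q i = ci (n :: down n) (Gf i) (fun _ => 0).
Proof.
  intros Hi. unfold chi. simpl ci. apply f_equal3; auto. apply functional_extensionality; intro b.
  rewrite cube_ci. rewrite <- ci_upd by (rewrite in_down; lia).
  apply f_equal3; auto. apply functional_extensionality; intro x.
  unfold Gf. rewrite upd_at. rewrite (upd_comm x n i) by lia.
  unfold classifier. rewrite (dot_upd n (upd x i b) n), (dot_upd n x n).
  destruct (lt_dec n n); [lia|]. rewrite !Rplus_0_r. reflexivity.
Qed.

End G.


Ltac toR := match goal with |- @eq _ ?x ?y => change (@eq R x y) end.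

Definition clamp01 (y : R) : R := Rmax 0 (Rmin 1 y).
Definition pc (s : R) : R := clamp01 (1 - s).

Lemma clamp_cases y : (y <= 0 /\ clamp01 y = 0) \/ (0 <= y <= 1 /\ clamp01 y = y) \/ (1 <= y /\ clamp01 y = 1).
Proof. unfold clamp01, Rmax, Rmin; repeat destruct Rle_dec; lra. Qed.

Lemma const_open f a b c : a <= b -> (forall x, a < x < b -> f x = c) ->
  ex_RInt f a b /\ RInt f a b = c * (b - a).
Proof.
  intros Hab H. split.
  - apply (ex_RInt_ext (fun _ => c)). intros x Hx; rewrite H; auto.
    unfold Rmin, Rmax in Hx; destruct Rle_dec; lra. apply ex_RInt_const.
  - rewrite (RInt_ext f (fun _ => c)). rewrite RInt_const. apply Rmult_comm.
    intros x Hx; apply H. unfold Rmin, Rmax in Hx; destruct Rle_dec; lra.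
Qed.

Definition stepf d a X Y u : R := if Rle_dec d (a * u) then X else Y.

Lemma Kstep a d X Y : a > 0 ->
  ex_RInt (stepf d a X Y) 0 1 /\
  RInt (stepf d a X Y) 0 1 = pc (d / a) * X + (1 - pc (d / a)) * Y.
Proof.
  intros Ha. set (u0 := d / a). assert (Hd : d = a * u0) by (unfold u0; field; lra).
  set (f := stepf d a X Y). unfold stepf in f.
  unfold pc.
  destruct (Rle_dec u0 0).
  - destruct (const_open f 0 1 X) as [A B]; try lra.
    { intros x Hx; unfold f; destruct Rle_dec; auto. exfalso; nra. }
    split; auto. rewrite B. destruct (clamp_cases (1 - u0)) as [[H1 E]|[[H1 E]|[H1 E]]]; rewrite E; toR.
    + lra.
    + replace u0 with 0 by lra. ring.
    + ring.
  - destruct (Rle_dec 1 u0).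
    + destruct (const_open f 0 1 Y) as [A B]; try lra.
      { intros x Hx; unfold f; destruct Rle_dec; auto. exfalso; nra. }
      split; auto. rewrite B. destruct (clamp_cases (1 - u0)) as [[H1 E]|[[H1 E]|[H1 E]]]; rewrite E; toR.
      * ring.
      * replace u0 with 1 by lra. ring.
      * lra.
    + destruct (const_open f 0 u0 Y) as [A1 B1]; try lra.
      { intros x Hx; unfold f; destruct Rle_dec; auto. exfalso; nra. }
      destruct (const_open f u0 1 X) as [A2 B2]; try lra.
      { intros x Hx; unfold f; destruct Rle_dec; auto. exfalso; nra. }
      assert (E : ex_RInt f 0 1) by (apply (ex_RInt_Chasles f 0 u0 1); auto).
      split; auto. rewrite <- (RInt_Chasles f 0 u0 1 A1 A2).
      change (plus (RInt f 0 u0) (RInt f u0 1)) with (RInt f 0 u0 + RInt f u0 1). rewrite B1, B2.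
      destruct (clamp_cases (1 - u0)) as [[H1 E']|[[H1 E']|[H1 E']]]; rewrite E'; toR; try lra; ring.
Qed.

Lemma K a d X Y : a > 0 ->
  Rint (fun u => if Rle_dec d (a * u) then X else Y) 0 1 = pc (d / a) * X + (1 - pc (d / a)) * Y.
Proof.
  intros Ha. change (Rint (stepf d a X Y) 0 1 = pc (d / a) * X + (1 - pc (d / a)) * Y).
  destruct (Kstep a d X Y Ha) as [A B]. rewrite Rint_RInt; auto. apply ex_RInt_Reals_0; auto.
Qed.

Definition phi (p : R) : R := 2 * p * (1 - p).

Lemma K3 q C al be : al > 0 ->
  Rint (fun o => Rint (fun m => Rint (fun b => Rabs (ind q (C + be * o + al * b) - ind q (C + be * o + al * m))) 0 1) 0 1) 0 1
  = Rint (fun o => phi (pc ((q - C - be * o) / al))) 0 1.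
Proof.
  intros Hal. apply f_equal3; auto. apply functional_extensionality; intro o.
  set (p := pc ((q - C - be * o) / al)).
  rewrite (functional_extensionality
    (fun m => Rint (fun b => Rabs (ind q (C + be * o + al * b) - ind q (C + be * o + al * m))) 0 1)
    (fun m => if Rle_dec (q - C - be * o) (al * m) then (p * 0 + (1 - p) * 1) else (p * 1 + (1 - p) * 0))).
  - rewrite K by auto. fold p. unfold phi. ring.
  - intro m. rewrite (functional_extensionality
      (fun b => Rabs (ind q (C + be * o + al * b) - ind q (C + be * o + al * m)))
      (fun b => if Rle_dec (q - C - be * o) (al * b) then Rabs (1 - ind q (C + be * o + al * m)) else Rabs (0 - ind q (C + be * o + al * m)))).
    + rewrite K by auto. fold p. unfold ind.
      destruct (Rle_dec q (C + be * o + al * m)), (Rle_dec (q - C - be * o) (al * m)); try (exfalso; lra);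
      unfold Rabs; repeat destruct Rcase_abs; lra.
    + intro b. unfold ind. destruct (Rle_dec q (C + be * o + al * b)), (Rle_dec (q - C - be * o) (al * b)); auto; exfalso; lra.
Qed.

Definition P3 (y : R) : R := y ^ 2 - 2 / 3 * y ^ 3.
Definition Psi (y : R) : R := P3 (clamp01 y).

Lemma cl0 y : y <= 0 -> clamp01 y = 0.
Proof. unfold clamp01, Rmax, Rmin; repeat destruct Rle_dec; lra. Qed.
Lemma clm y : 0 <= y <= 1 -> clamp01 y = y.
Proof. unfold clamp01, Rmax, Rmin; repeat destruct Rle_dec; lra. Qed.
Lemma cl1 y : 1 <= y -> clamp01 y = 1.
Proof. unfold clamp01, Rmax, Rmin; repeat destruct Rle_dec; lra. Qed.

Lemma key_ineq r g : 0 < r <= 1 -> 0 <= g <= r -> r ^ 2 * P3 (g / r) <= P3 g.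
Proof.
  intros Hr Hg. set (t := g / r). assert (Ht : g = r * t) by (unfold t; field; lra).
  assert (0 <= t) by (unfold t; apply Rdiv_le_0_compat; lra).
  rewrite Ht. unfold P3.
  assert (0 <= r ^ 2 * t ^ 3 * (1 - r)) by (apply Rmult_le_pos; [apply Rmult_le_pos|]; try apply pow_le; lra).
  nra.
Qed.

Lemma Psi_ineq r g t1 t2 : 0 < r <= 1 -> r * t1 = r + g -> r * t2 = r + g - 1 ->
  r * (Psi t1 - Psi t2) <= / r * (Psi (r + g) - Psi g).
Proof.
  intros Hr H1 H2. apply Rmult_le_reg_l with r; [lra|].
  replace (r * (/ r * (Psi (r + g) - Psi g))) with (Psi (r + g) - Psi g) by (field; lra).
  unfold Psi.
  assert (T1 : t1 = (r + g) / r) by (apply (Rmult_eq_reg_l r); [rewrite H1; field|]; lra).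
  assert (T2 : t2 = (r + g - 1) / r) by (apply (Rmult_eq_reg_l r); [rewrite H2; field|]; lra).
  destruct (Rle_dec g (- r)).
  - rewrite (cl0 g), (cl0 (r + g)), (cl0 t1), (cl0 t2); try lra; try nra.
  - destruct (Rle_dec g 0).
    + rewrite (cl0 g), (clm (r + g)), (clm t1), (cl0 t2); try lra; try nra.
      rewrite T1. replace (P3 0) with 0 by (unfold P3; field).
      pose proof (key_ineq r (r + g) Hr ltac:(lra)). lra.
    + destruct (Rle_dec g (1 - r)).
      * rewrite (clm g), (clm (r + g)), (cl1 t1), (cl0 t2); try lra; try nra.
        unfold P3.
        assert (0 <= r * (2 * g * (1 - g - r) + 2 / 3 * r * (1 - r))).
        { apply Rmult_le_pos; [lra|]. assert (0 <= g * (1 - g - r)) by nra. nra. }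
        nra.
      * destruct (Rle_dec g 1).
        -- rewrite (clm g), (cl1 (r + g)), (cl1 t1), (clm t2); try lra; try nra.
           assert (Ha : P3 1 - P3 g = P3 (1 - g)) by (unfold P3; field).
           assert (Hb : P3 1 - P3 t2 = P3 ((1 - g) / r)).
           { rewrite T2. replace ((r + g - 1) / r) with (1 - (1 - g) / r) by (field; lra).
             unfold P3; field. lra. }
           pose proof (key_ineq r (1 - g) Hr ltac:(lra)).
           replace (r * (r * (P3 1 - P3 t2))) with (r ^ 2 * (P3 1 - P3 t2)) by ring.
           rewrite Hb. lra.
        -- rewrite (cl1 g), (cl1 (r + g)), (cl1 t1), (cl1 t2); try lra; try nra.
Qed.

Lemma lip_cont f L : 0 <= L -> (forall x y, Rabs (f x - f y) <= L * Rabs (x - y)) -> forall x, continuous f x.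
Proof.
  intros HL H x. apply continuity_pt_filterlim. apply continuity_pt_locally. intros eps.
  assert (Hd : 0 < eps / (L + 1)) by (apply Rdiv_lt_0_compat; [apply cond_pos|lra]).
  exists (mkposreal _ Hd). intros y Hy. unfold ball in Hy; simpl in Hy. unfold AbsRing_ball, abs, minus, plus, opp in Hy; simpl in Hy.
  eapply Rle_lt_trans; [apply H|].
  pose proof (cond_pos eps). pose proof (Rabs_pos (y - x)).
  apply Rle_lt_trans with ((L + 1) * Rabs (y - x)); [nra|].
  apply Rmult_lt_reg_r with (/ (L + 1)). apply Rinv_0_lt_compat; lra.
  replace ((L + 1) * Rabs (y - x) * / (L + 1)) with (Rabs (y - x)) by (field; lra).
  exact Hy.
Qed.

Lemma clamp_lip x y : Rabs (clamp01 x - clamp01 y) <= Rabs (x - y).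
Proof. unfold clamp01, Rmax, Rmin; repeat destruct Rle_dec; unfold Rabs; repeat destruct Rcase_abs; lra. Qed.

Lemma clamp_rng x : 0 <= clamp01 x <= 1.
Proof. unfold clamp01, Rmax, Rmin; repeat destruct Rle_dec; lra. Qed.

Definition h (y : R) : R := phi (clamp01 y).

Lemma h_lip x y : Rabs (h x - h y) <= 2 * Rabs (x - y).
Proof.
  unfold h, phi. pose proof (clamp_lip x y). pose proof (clamp_rng x). pose proof (clamp_rng y).
  set (c1 := clamp01 x) in *. set (c2 := clamp01 y) in *.
  replace (2 * c1 * (1 - c1) - 2 * c2 * (1 - c2)) with (2 * ((c1 - c2) * (1 - c1 - c2))) by ring.
  rewrite Rabs_mult, Rabs_mult. rewrite (Rabs_right 2) by lra.
  assert (Rabs (1 - c1 - c2) <= 1) by (unfold Rabs; destruct Rcase_abs; lra).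
  pose proof (Rabs_pos (c1 - c2)). pose proof (Rabs_pos (1 - c1 - c2)). nra.
Qed.

Lemma h_cont x : continuous h x.
Proof. apply (lip_cont h 2); [lra| apply h_lip]. Qed.

Lemma h_ex a b : ex_RInt h a b.
Proof. apply (@ex_RInt_continuous R_CompleteNormedModule); intros; apply h_cont. Qed.

Lemma RInt_h0 y : RInt h 0 y = Psi y.
Proof.
  destruct (Rle_dec y 0).
  - rewrite (RInt_ext h (fun _ => 0)).
    + rewrite RInt_const. unfold Psi. rewrite cl0 by lra. unfold P3. change (scal (y - 0) 0) with ((y - 0) * 0).
      toR. field.
    + intros x Hx. unfold Rmin, Rmax in Hx; destruct Rle_dec; try lra. unfold h, phi; rewrite cl0 by lra; toR; ring.
  - assert (Hpoly : forall z, 0 <= z <= 1 -> RInt h 0 z = P3 z).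
    { intros z Hz. rewrite (RInt_ext h (fun t => 2 * t * (1 - t))).
      - apply is_RInt_unique.
        replace (P3 z) with (minus (P3 z) (P3 0)) by (unfold minus, plus, opp, P3; simpl; field).
        apply (is_RInt_derive P3 (fun t => 2 * t * (1 - t))).
        + intros x _. unfold P3. auto_derive; auto. field.
        + intros x _. apply (@ex_derive_continuous R_AbsRing R_NormedModule). auto_derive; auto.
      - intros x Hx. unfold Rmin, Rmax in Hx; destruct Rle_dec; try lra. unfold h, phi; rewrite clm by lra; toR; ring. }
    destruct (Rle_dec y 1).
    + rewrite Hpoly by lra. unfold Psi; rewrite clm by lra; auto.
    + rewrite <- (RInt_Chasles h 0 1 y) by apply h_ex.
      rewrite Hpoly by lra. rewrite (RInt_ext h (fun _ => 0) 1 y).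
      * rewrite RInt_const. unfold Psi. rewrite cl1 by lra. change (scal (y - 1) 0) with ((y - 1) * 0).
        change (plus (P3 1) ((y - 1) * 0)) with (P3 1 + (y - 1) * 0). toR. ring.
      * intros x Hx. unfold Rmin, Rmax in Hx; destruct Rle_dec; try lra. unfold h, phi; rewrite cl1 by lra; toR; ring.
Qed.

Lemma RInt_h x y : RInt h x y = Psi y - Psi x.
Proof.
  rewrite <- (RInt_Chasles h x 0 y) by apply h_ex.
  rewrite <- (opp_RInt_swap h 0 x) by apply h_ex.
  rewrite !RInt_h0. change (plus (opp (Psi x)) (Psi y)) with (- Psi x + Psi y). toR. ring.
Qed.

Lemma h_comp k m : k > 0 -> Rint (fun u => h (k * u + m)) 0 1 = / k * (Psi (k + m) - Psi m).
Proof.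
  intros Hk.
  assert (E : ex_RInt (fun u => h (k * u + m)) 0 1).
  { apply (@ex_RInt_continuous R_CompleteNormedModule). intros z _.
    apply (lip_cont _ (2 * k)); [lra|]. intros x y. eapply Rle_trans; [apply h_lip|].
    replace (k * x + m - (k * y + m)) with (k * (x - y)) by ring. rewrite Rabs_mult, Rabs_right by lra. lra. }
  rewrite Rint_RInt by (apply ex_RInt_Reals_0; auto).
  pose proof (RInt_comp_lin h k m 0 1 (h_ex _ _)) as C.
  rewrite (RInt_scal (fun u => h (k * u + m))) in C by auto.
  change (scal k (RInt (fun u => h (k * u + m)) 0 1)) with (k * RInt (fun u => h (k * u + m)) 0 1) in C.
  rewrite RInt_h in C. replace (k * 1 + m) with (k + m) in C by ring. replace (k * 0 + m) with m in C by ring.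
  apply (Rmult_eq_reg_l k); [|lra]. rewrite C. field. lra.
Qed.

Lemma oneD q C a e : a >= e -> e > 0 ->
  Rint (fun u => phi (pc ((q - C - a * u) / e))) 0 1 <= Rint (fun v => phi (pc ((q - C - e * v) / a))) 0 1.
Proof.
  intros Hae He. set (c := q - C).
  rewrite (functional_extensionality (fun u => phi (pc ((c - a * u) / e))) (fun u => h (a / e * u + (1 - c / e)))).
  2:{ intro u. unfold h, pc. f_equal. f_equal. field. lra. }
  rewrite (functional_extensionality (fun v => phi (pc ((c - e * v) / a))) (fun v => h (e / a * v + (1 - c / a)))).
  2:{ intro v. unfold h, pc. f_equal. f_equal. field. lra. }
  rewrite !h_comp by (apply Rdiv_lt_0_compat; lra).
  replace (/ (a / e)) with (e / a) by (field; lra).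
  apply Psi_ineq.
  - split. apply Rdiv_lt_0_compat; lra. apply Rmult_le_reg_r with a; [lra|]. field_simplify; lra.
  - field; lra.
  - field; lra.
Qed.

Lemma eval n w q z o1 o2 u v b C : (o1 < n)%nat -> (o2 < n)%nat -> o1 <> o2 ->
  C = DB n w z - w o1 * z o1 - w o2 * z o2 ->
  Gf n w q o2 (upd (upd (upd z o1 u) o2 v) n b) =
  Rabs (ind q (C + w o1 * u + w o2 * b) - ind q (C + w o1 * u + w o2 * v)).
Proof.
  intros H1 H2 H12 HC. set (y := upd (upd (upd z o1 u) o2 v) n b).
  unfold Gf.
  change (classifier n w q (upd y o2 (y n))) with (ind q (DA n w o2 y)).
  change (classifier n w q y) with (ind q (DB n w y)).
  rewrite DA_eq by auto.
  assert (Hyn : y n = b) by (unfold y; apply upd_eq).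
  assert (Hyo : y o2 = v) by (unfold y; rewrite upd_neq by lia; apply upd_eq).
  assert (Hy : DB n w y = C + w o1 * u + w o2 * v).
  { unfold y. rewrite !AffS_B. unfold alB, upd. repeat destruct Nat.eq_dec; try lia.
    repeat destruct Compare_dec.lt_dec; try lia. rewrite HC. ring. }
  rewrite Hyn, Hyo, Hy.
  replace (C + w o1 * u + w o2 * v + w o2 * (b - v)) with (C + w o1 * u + w o2 * b) by ring.
  reflexivity.
Qed.

Lemma core n w q i j : (i < n)%nat -> (j < n)%nat -> i <> j -> w i >= w j -> w j > 0 ->
  forall z, ci (i :: j :: n :: nil) (Gf n w q j) z <= ci (j :: i :: n :: nil) (Gf n w q i) z.
Proof.
  intros Hi Hj Hij Hw Hwj z.
  set (C := DB n w z - w i * z i - w j * z j).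
  assert (E1 : ci (i :: j :: n :: nil) (Gf n w q j) z =
    Rint (fun o => Rint (fun m => Rint (fun b => Rabs (ind q (C + w i * o + w j * b) - ind q (C + w i * o + w j * m))) 0 1) 0 1) 0 1).
  { simpl. apply f_equal3; auto. apply functional_extensionality; intro u.
    apply f_equal3; auto. apply functional_extensionality; intro v.
    apply f_equal3; auto. apply functional_extensionality; intro b.
    apply eval; auto. }
  assert (E2 : ci (j :: i :: n :: nil) (Gf n w q i) z =
    Rint (fun o => Rint (fun m => Rint (fun b => Rabs (ind q (C + w j * o + w i * b) - ind q (C + w j * o + w i * m))) 0 1) 0 1) 0 1).
  { simpl. apply f_equal3; auto. apply functional_extensionality; intro u.
    apply f_equal3; auto. apply functional_extensionality; intro v.
    apply f_equal3; auto. apply functional_extensionality; intro b.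
    apply eval; auto. unfold C; ring. }
  rewrite E1, E2, !K3 by lra.
  apply oneD; auto.
Qed.

Theorem mainTheorem10 (n : nat) (w : nat -> R) (q : R) (i j : nat) :
  (i < n)%nat -> (j < n)%nat -> i <> j ->
  w i >= w j -> w j > 0 ->
  chi n w q i >= chi n w q j.
Proof.
  intros Hi Hj Hij Hw Hwj. apply Rle_ge.
  rewrite !chi_ci by auto.
  set (rest := filter (fun k => andb (negb (Nat.eqb k i)) (negb (Nat.eqb k j))) (down n)).
  assert (ND : NoDup (n :: down n)).
  { constructor. rewrite in_down; lia. apply NoDup_down. }
  assert (Hrest : forall k, In k rest <-> (k < n /\ k <> i /\ k <> j)%nat).
  { intros k; unfold rest; rewrite filter_In, in_down.
    destruct (Nat.eqb_spec k i), (Nat.eqb_spec k j); simpl; intuition. }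
  assert (Perm : forall a b, (a = i /\ b = j) \/ (a = j /\ b = i) ->
             Permutation (n :: down n) (rest ++ a :: b :: n :: nil)).
  { intros a b Hab. apply NoDup_Permutation; auto.
    - apply NoDup_app. apply NoDup_filter, NoDup_down.
      + repeat constructor; simpl; lia.
      + intros x Hx. rewrite Hrest in Hx. simpl. lia.
    - intros x. rewrite in_app_iff, Hrest. simpl. rewrite in_down. lia. }
  rewrite (ci_perm _ (LC3_G n w q i Hi) _ _ (Perm j i ltac:(right; auto)) ND).
  rewrite (ci_perm _ (LC3_G n w q j Hj) _ _ (Perm i j ltac:(left; auto)) ND).
  rewrite !ci_app. apply ci_mono.
  - apply LC3_ci, LC3_G; auto.
  - apply LC3_ci, LC3_G; auto.
  - intros x; apply core; auto.
Qed.
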